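(* Let $\mathcal I$ be an independent family. The following are equivalent: (1) $\mathcal I$ is densely maximal; (2) $\mathcal I$ has a unique diagonalization filter, and it equals the density filter $\mathrm{fil}(\mathcal I)$.
   Context: A family $\mathcal I \subseteq [\omega]^\omega$ is independent if for all finite disjoint $\mathcal A, \mathcal B \subseteq \mathcal I$ the set $\bigcap \mathcal A \setminus \bigcup \mathcal B$ is infinite. $\mathsf{FF}(\mathcal I)$ is the set of finite partial functions $h:\mathcal I \to 2$; $\mathcal I^h := \bigcap_{A \in \mathrm{dom}(h)} A^{h(A)}$ with $A^0 = A$, $A^1 = \omega\setminus A$. $\mathcal I$ is densely maximal if for every $X \in [\omega]^\omega$ and every $h \in \mathsf{FF}(\mathcal I)$ there is $h' \supseteq h$ in $\mathsf{FF}(\mathcal I)$ with $\mathcal I^{h'} \setminus X$ or $\mathcal I^{h'} \cap X$ finite. The density filter $\mathrm{fil}(\mathcal I)$ is the set of $X \in [\omega]^\omega$ such that for every $h \in \mathsf{FF}(\mathcal I)$ there is $h' \supseteq h$ in $\mathsf{FF}(\mathcal I)$ with $\mathcal I^{h'} \setminus X$ finite. A diagonalization filter for $\mathcal I$ is a filter $\mathcal F$ on $\omega$ which is maximal (under inclusion) with respect to the property that every $X\in\mathcal F$ has infinite intersection with every $\mathcal I^h$, $h \in \mathsf{FF}(\mathcal I)$. *)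

(* Defs.v *)
From Stdlib Require Import List.
Import ListNotations.

Definition sset := nat -> Prop.

Definition finite_set (X : sset) : Prop := exists N, forall n, X n -> n < N.
Definition infinite_set (X : sset) : Prop := ~ finite_set X.

Definition cap_minus_cup (As Bs : list sset) : sset :=
  fun n => (forall A, In A As -> A n) /\ (forall B, In B Bs -> ~ B n).

Definition independent (I : sset -> Prop) : Prop :=
  (forall A, I A -> infinite_set A) /\
  forall As Bs : list sset,
    (forall A, In A As -> I A) -> (forall B, In B Bs -> I B) ->
    (forall X, In X As -> ~ In X Bs) ->
    infinite_set (cap_minus_cup As Bs).

(* Finite partial functions h : I -> 2, as finite graphs (lists of pairs);
   the boolean false stands for 0 and true for 1. *)
Definition FF (I : sset -> Prop) (h : list (sset * bool)) : Prop :=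
  (forall A b, In (A, b) h -> I A) /\
  (forall A b c, In (A, b) h -> In (A, c) h -> b = c).

Definition power (A : sset) (b : bool) : sset :=
  fun n => if b then ~ A n else A n.

Definition Ih (h : list (sset * bool)) : sset :=
  fun n => forall A b, In (A, b) h -> power A b n.

Definition extends (h' h : list (sset * bool)) : Prop :=
  forall p, In p h -> In p h'.

Definition diff (X Y : sset) : sset := fun n => X n /\ ~ Y n.
Definition inter (X Y : sset) : sset := fun n => X n /\ Y n.

Definition densely_maximal (I : sset -> Prop) : Prop :=
  forall X : sset, infinite_set X ->
  forall h, FF I h ->
  exists h', FF I h' /\ extends h' h /\
    (finite_set (diff (Ih h') X) \/ finite_set (inter (Ih h') X)).

Definition fil (I : sset -> Prop) : sset -> Prop :=
  fun X => infinite_set X /\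
    forall h, FF I h -> exists h', FF I h' /\ extends h' h /\ finite_set (diff (Ih h') X).

Definition is_filter (F : sset -> Prop) : Prop :=
  F (fun _ => True) /\
  ~ F (fun _ => False) /\
  (forall X Y, F X -> (forall n, X n -> Y n) -> F Y) /\
  (forall X Y, F X -> F Y -> F (inter X Y)).

Definition meets_all_Ih (I : sset -> Prop) (F : sset -> Prop) : Prop :=
  forall X, F X -> forall h, FF I h -> infinite_set (inter X (Ih h)).

Definition diagonalization_filter (I : sset -> Prop) (F : sset -> Prop) : Prop :=
  is_filter F /\ meets_all_Ih I F /\
  forall G, is_filter G -> meets_all_Ih I G -> (forall X, F X -> G X) ->
    forall X, G X -> F X.

(* Main.v *)
Require Import Defs.
From Stdlib Require Import List Classical Lia.
Import ListNotations.

Lemma finite_sub (X Y : sset) : (forall n, X n -> Y n) -> finite_set Y -> finite_set X.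
Proof. intros H [N HN]. exists N. intros n Hn. apply HN, H, Hn. Qed.

Lemma finite_union (X Y : sset) : finite_set X -> finite_set Y -> finite_set (fun n => X n \/ Y n).
Proof.
  intros [N HN] [M HM]. exists (N + M). intros n [h|h].
  - specialize (HN n h); lia.
  - specialize (HM n h); lia.
Qed.

Lemma infinite_minus (A B C : sset) : infinite_set A -> finite_set B ->
  (forall n, A n -> C n \/ B n) -> infinite_set C.
Proof.
  intros HA HB H HC. apply HA. eapply finite_sub; [exact H|].
  apply finite_union; assumption.
Qed.

Lemma Ih_ext h' h n : extends h' h -> Ih h' n -> Ih h n.
Proof. intros E H A b Hin. apply H, E, Hin. Qed.

Lemma Ih_infinite I h : independent I -> FF I h -> infinite_set (Ih h).
Proof.
  intros [_ Hind] [HI Hc].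
  pose (Asl := map fst (filter (fun p => negb (snd p)) h)).
  pose (Bsl := map fst (filter (fun p => snd p) h)).
  assert (Hinf : infinite_set (cap_minus_cup Asl Bsl)).
  { apply Hind.
    - intros A HA. unfold Asl in HA. apply in_map_iff in HA as [[A' b] [E Hf]].
      apply filter_In in Hf as [Hf _]. simpl in E; subst. eapply HI; eauto.
    - intros A HA. unfold Bsl in HA. apply in_map_iff in HA as [[A' b] [E Hf]].
      apply filter_In in Hf as [Hf _]. simpl in E; subst. eapply HI; eauto.
    - intros X HA HB. unfold Asl in HA. apply in_map_iff in HA as [[A' b] [E Hf]].
      apply filter_In in Hf as [Hf Hb]. simpl in E, Hb; subst.
      unfold Bsl in HB. apply in_map_iff in HB as [[A'' c] [E Hf']].
      apply filter_In in Hf' as [Hf' Hc']. simpl in E, Hc'; subst.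
      destruct b; try discriminate. specialize (Hc _ _ _ Hf Hf'). discriminate. }
  intro Hf. apply Hinf. eapply finite_sub; [|exact Hf].
  intros n [H1 H2] A b Hin. unfold power. destruct b.
  - apply H2. unfold Bsl. apply in_map_iff. exists (A, true). split; auto.
    apply filter_In; auto.
  - apply H1. unfold Asl. apply in_map_iff. exists (A, false). split; auto.
    apply filter_In; auto.
Qed.

Lemma FF_nil I : FF I [].
Proof. split; intros; simpl in *; contradiction. Qed.

Lemma nat_infinite : infinite_set (fun _ => True).
Proof. intros [N HN]. specialize (HN N I). lia. Qed.

Lemma fil_filter I : independent I -> is_filter (fil I).
Proof.
  intros Hind. split; [|split; [|split]].
  - split. apply nat_infinite. intros h Hh. exists h. split; [|split]; auto.
    intros p; auto. exists 0. intros n [_ H]. exfalso; auto.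
  - intros [H _]. apply H. exists 0. intros n [].
  - intros X Y [HX Hd] Hs. split.
    + intro Hf. apply HX. eapply finite_sub; [exact Hs|exact Hf].
    + intros h Hh. destruct (Hd h Hh) as [h' [F1 [E1 Hf]]]. exists h'. split; [|split]; auto.
      eapply finite_sub; [|exact Hf]. intros n [a b]. split; auto.
  - intros X Y [HX Hx] [HY Hy]. 
    assert (Hd : forall h, FF I h -> exists h', FF I h' /\ extends h' h /\ finite_set (diff (Ih h') (inter X Y))).
    { intros h Hh. destruct (Hx h Hh) as [h1 [F1 [E1 Hf1]]].
      destruct (Hy h1 F1) as [h2 [F2 [E2 Hf2]]]. exists h2. split; [|split]; auto.
      intros p Hp; auto.
      eapply finite_sub; [|apply (finite_union _ _ Hf1 Hf2)].
      intros n [Hn Hn']. destruct (classic (X n)) as [Hxn|Hxn].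
      - right. split; auto. intro Hyn. apply Hn'. split; auto.
      - left. split; auto. eapply Ih_ext; eauto. }
    split; auto.
    intro Hf. destruct (Hd [] (FF_nil I)) as [h' [F' [_ Hf']]].
    apply (Ih_infinite I h' Hind F'). eapply finite_sub; [|apply (finite_union _ _ Hf Hf')].
    intros n Hn. destruct (classic (inter X Y n)); [left|right]; auto. split; auto.
Qed.

Lemma fil_meets I : independent I -> meets_all_Ih I (fil I).
Proof.
  intros Hind X [_ Hd] h Hh. destruct (Hd h Hh) as [h' [F' [E' Hf]]].
  apply (infinite_minus _ _ _ (Ih_infinite I h' Hind F') Hf).
  intros n Hn. destruct (classic (X n)); [left|right]. split; auto. eapply Ih_ext; eauto.
  split; auto.
Qed.

Lemma gen I F X : is_filter F -> meets_all_Ih I F ->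
  (forall Y h, F Y -> FF I h -> infinite_set (fun n => Y n /\ X n /\ Ih h n)) ->
  is_filter (fun W => exists Y, F Y /\ forall n, Y n -> X n -> W n) /\
  meets_all_Ih I (fun W => exists Y, F Y /\ forall n, Y n -> X n -> W n) /\
  (forall Y, F Y -> exists Z, F Z /\ forall n, Z n -> X n -> Y n) /\
  (exists Y, F Y /\ forall n, Y n -> X n -> X n).
Proof.
  intros [Ht [He [Hu Hi]]] Hm H.
  assert (Hmeet : meets_all_Ih I (fun W => exists Y, F Y /\ forall n, Y n -> X n -> W n)).
  { intros W [Y [FY HY]] h Hh Hf. apply (H Y h FY Hh). eapply finite_sub; [|exact Hf].
    intros n [a [b c]]. split; auto. }
  split; [|split; [exact Hmeet|split]].
  - split; [|split; [|split]].
    + exists (fun _ => True). split; auto.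
    + intro Hg. apply (Hmeet _ Hg [] (FF_nil I)). exists 0. intros n [[] _].
    + intros W W' [Y [FY HY]] Hs. exists Y; split; auto.
    + intros W W' [Y [FY HY]] [Y' [FY' HY']]. exists (inter Y Y'). split; auto.
      intros n [a b] c. split; auto.
  - intros Y FY. exists Y; split; auto.
  - exists (fun _ => True); split; auto.
Qed.

Lemma fil_sub_diag I F X : independent I -> diagonalization_filter I F -> fil I X -> F X.
Proof.
  intros Hind [Hf [Hm Hmax]] [HX Hd].
  destruct (gen I F X Hf Hm) as [G1 [G2 [G3 G4]]].
  - intros Y h FY Hh. destruct (Hd h Hh) as [h' [F' [E' Hfin]]].
    apply (infinite_minus _ _ _ (Hm Y FY h' F') Hfin).
    intros n [Yn Ihn]. destruct (classic (X n)); [left|right]. split; [|split]; auto.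
    eapply Ih_ext; eauto. split; auto.
  - apply (Hmax _ G1 G2 G3 X G4).
Qed.

Lemma dm_fil I X : densely_maximal I ->
  (forall h, FF I h -> infinite_set (inter X (Ih h))) -> fil I X.
Proof.
  intros Hdm H. assert (HX : infinite_set X).
  { intro Hf. apply (H [] (FF_nil I)). eapply finite_sub; [|exact Hf]. intros n [a _]; auto. }
  split; auto. intros h Hh. destruct (Hdm X HX h Hh) as [h' [F' [E' [Hf|Hf]]]].
  - exists h'; auto.
  - exfalso. apply (H h' F'). eapply finite_sub; [|exact Hf]. intros n [a b]; split; auto.
Qed.

Lemma key I h Z : independent I -> diagonalization_filter I (fil I) -> FF I h ->
  (forall h', FF I h' -> extends h' h -> infinite_set (inter (Ih h') Z)) ->
  fil I (fun n => Z n \/ ~ Ih h n).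
Proof.
  intros Hind [Hf [Hm Hmax]] Hh HZ.
  destruct (gen I (fil I) (fun n => Z n \/ ~ Ih h n) Hf Hm) as [G1 [G2 [G3 G4]]].
  2: apply (Hmax _ G1 G2 G3 _ G4).
  intros V h'' FV Hh''.
  destruct (classic (exists A b c, In (A, b) h'' /\ In (A, c) h /\ b <> c)) as
    [[A [b [c [H1 [H2 H3]]]]]|Hcomp].
  - apply (infinite_minus _ _ _ (Hm V FV h'' Hh'') (ltac:(exists 0; intros n [])
       : finite_set (fun _ => False))).
    intros n [Vn In'']. left. split; [|split]; auto. right. intro Ihn.
    specialize (In'' _ _ H1). specialize (Ihn _ _ H2). unfold power in *.
    destruct b, c; auto.
  - assert (Hc : forall A b c, In (A, b) h'' -> In (A, c) h -> b = c).
    { intros A b c H1 H2. apply NNPP. intro H3. apply Hcomp. exists A, b, c; auto. }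
    assert (F3 : FF I (h'' ++ h)).
    { destruct Hh'' as [I1 C1]. destruct Hh as [I2 C2]. split.
      - intros A b Hin. apply in_app_iff in Hin as [|]; eauto.
      - intros A b c H1 H2. apply in_app_iff in H1 as [H1|H1]; apply in_app_iff in H2 as [H2|H2]; eauto.
        symmetry; eauto. }
    destruct FV as [_ Hd]. destruct (Hd _ F3) as [h4 [F4 [E4 Hfin]]].
    assert (E4h : extends h4 h). { intros p Hp. apply E4, in_app_iff; auto. }
    assert (E4h'' : extends h4 h''). { intros p Hp. apply E4, in_app_iff; auto. }
    apply (infinite_minus _ _ _ (HZ h4 F4 E4h) Hfin).
    intros n [Ihn Zn]. destruct (classic (V n)); [left|right]. split; [|split]; auto.
    eapply Ih_ext; eauto. split; auto.
Qed.

Theorem lemma2p3 (I : sset -> Prop) :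
  independent I ->
  (densely_maximal I <->
   (diagonalization_filter I (fil I) /\
    forall F, diagonalization_filter I F -> forall X, F X <-> fil I X)).
Proof.
  intros Hind. split.
  - intros Hdm.
    assert (Hd : diagonalization_filter I (fil I)).
    { split; [apply fil_filter; auto|split; [apply fil_meets; auto|]].
      intros G HG Hm Hsub X GX. apply dm_fil; [auto|]. intros h Hh. exact (Hm X GX h Hh). }
    split; auto. intros F HF X. split.
    + intros FX. apply dm_fil; [auto|]. intros h Hh. destruct HF as [_ [Hm _]]. apply (Hm X FX h Hh).
    + apply fil_sub_diag; auto.
  - intros [Hd _] X HX h Hh. apply NNPP. intro Hno.
    assert (Hall : forall h', FF I h' -> extends h' h ->
      infinite_set (diff (Ih h') X) /\ infinite_set (inter (Ih h') X)).
    { intros h' F' E'. split; intro Hf; apply Hno; exists h'; auto. }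
    pose proof (key I h X Hind Hd Hh (fun h' F' E' => proj2 (Hall h' F' E'))) as K1.
    pose proof (key I h (fun n => ~ X n) Hind Hd Hh (fun h' F' E' => proj1 (Hall h' F' E'))) as K2.
    destruct (fil_filter I Hind) as [_ [_ [_ Hi]]].
    pose proof (Hi _ _ K1 K2) as K3.
    apply (fil_meets I Hind _ K3 h Hh). exists 0.
    intros n [[[a|a] [b|b]] c]; exfalso; auto.
Qed.
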